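(* Let $m\ge 3$ and let $K_{1,m}$ be the star with center $v_0$ and pendant vertices $v_1,\dots,v_m$. Then $P_{\{v_1\}}(K_{1,m})>P_{\{v_0\}}(K_{1,m})$, and consequently $\max\{P_A(K_{1,m}): A\subseteq V(K_{1,m}),\ |A|=1\}=P_{\{v_1\}}(K_{1,m})$.
   Context: Classical zero forcing: given a set of black vertices (the rest white), the color change rule turns a white vertex $v$ black if $v$ is the only white neighbor of some black vertex $u$. A set $S$ is a zero forcing set if starting with $S$ black, finitely many applications of this rule make all of $V(G)$ black. Probabilistic process: for a vertex $u$, $N(u)$ is its open neighborhood, $N[u]=N(u)\cup\{u\}$, $\deg(u)=|N(u)|$. Given a current black set $Z$, $F(u\to v)=0$ if $u\notin Z$, or $v\notin N(u)$, or $N[u]\subseteq Z$; otherwise $F(u\to v)=|N[u]\cap Z|/\deg(u)$. One global application of the probabilistic color change rule: black vertices stay black; independently for every pair $(u,v)$ with $u$ black and $v\in N(u)$ white, $u$ forces $v$ with probability $F(u\to v)$; a white vertex becomes black iff some black neighbor forces it. Starting with black set $A$ at step $0$ and applying this rule repeatedly, let $S^k$ be the set of colorings reachable with positive probability after exactly $k$ steps and $P^{(k)}$ the probability distribution on them. Let $T^k\subseteq S^k$ be the colorings whose black set contains a classical zero forcing set of $G$. Define $P_A(G)=P^{(k_0)}(T^{k_0})$ where $k_0$ is the least $k\ge 0$ with $T^k\neq\emptyset$. *)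

(* Defs.v *)
From HB Require Import structures.
From mathcomp Require Import all_boot all_order all_algebra.
Set Implicit Arguments. Unset Strict Implicit. Unset Printing Implicit Defensive.
Import Order.TTheory GRing.Theory Num.Theory.

Section PZF.
Variables (V : finType) (e : rel V).

Definition nbhd (u : V) : {set V} := [set w | e u w].
Definition cnbhd (u : V) : {set V} := u |: nbhd u.
Definition deg (u : V) : nat := #|nbhd u|.

(* one round of the classical color change rule (all possible forces at once) *)
Definition cc_step (Z : {set V}) : {set V} :=
  Z :|: [set v | [exists u, [&& u \in Z, v \notin Z, e u v &
            [forall w, (e u w && (w \notin Z)) ==> (w == v)]]]].

(* S is a zero forcing set: repeated application of the rule colours all of V.
   (#|V| rounds suffice, since each nontrivial round adds a vertex.) *)
Definition zfs (S : {set V}) : bool := iter #|V| cc_step S == setT.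

Definition contains_zfs (Z : {set V}) : bool :=
  [exists S : {set V}, (S \subset Z) && zfs S].

Local Open Scope ring_scope.

Definition Fprob (Z : {set V}) (u v : V) : rat :=
  if (u \notin Z) || ~~ e u v || (cnbhd u \subset Z) then 0
  else (#|cnbhd u :&: Z|)%:R / (deg u)%:R.

Definition stay_white (Z : {set V}) (v : V) : rat :=
  \prod_(u in Z | e u v) (1 - Fprob Z u v).

(* probability of going from black set Z to black set Z' in one global step
   (forces for different pairs are independent) *)
Definition trans (Z Z' : {set V}) : rat :=
  if Z \subset Z' then
    \prod_(v | v \notin Z) (if v \in Z' then 1 - stay_white Z v else stay_white Z v)
  else 0.

(* P^{(k)} : distribution on colourings (black sets) after k steps from A *)
Fixpoint dist (A : {set V}) (k : nat) (Z' : {set V}) : rat :=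
  match k with
  | 0 => (Z' == A)%:R
  | k.+1 => \sum_(Z : {set V}) dist A k Z * trans Z Z'
  end.

(* S^k is the support of dist A k; T^k those whose black set contains a ZFS *)
Definition in_S (A : {set V}) (k : nat) (Z : {set V}) : bool := dist A k Z != 0.
Definition T_nonempty (A : {set V}) (k : nat) : bool :=
  [exists Z : {set V}, in_S A k Z && contains_zfs Z].
Definition T_mass (A : {set V}) (k : nat) : rat :=
  \sum_(Z : {set V} | in_S A k Z && contains_zfs Z) dist A k Z.

(* P_A(G) = p : k0 is the least k with T^k nonempty and p = P^{(k0)}(T^{k0}) *)
Definition PA_is (A : {set V}) (p : rat) : Prop :=
  exists k0 : nat, T_nonempty A k0 /\ (forall k, (k < k0)%N -> ~~ T_nonempty A k)
                   /\ p = T_mass A k0.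

End PZF.

(* the star K_{1,m} on vertices 'I_m.+1: center v_0 = ord0, leaves v_i = i *)
Definition star_adj (m : nat) : rel 'I_m.+1 :=
  fun i j => (i == ord0) (+) (j == ord0).
Arguments star_adj m : clear implicits.

(* Main.v *)
Require Import Defs.
From HB Require Import structures.
From mathcomp Require Import all_boot all_order all_algebra.
From mathcomp Require Import zify ring lra.
Import Order.TTheory GRing.Theory Num.Theory.
Set Implicit Arguments. Unset Strict Implicit. Unset Printing Implicit Defensive.
Local Open Scope ring_scope.

Lemma ineq m : (3 <= m)%N ->
  let x : rat := (1%N)%:R / m%:R in let y : rat := (2%N)%:R / m%:R in
  x ^+ m + ((1 - x) * x ^+ m.-1) *+ m < y ^+ m.-1 + ((1 - y) * y ^+ m.-2) *+ m.-1.
Proof.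
move=> hm3; have [n ->] : exists n, m = n.+3 by exists (m - 3)%N; lia.
cbv zeta; set x : rat := (1%N)%:R / _; set y : rat := (2%N)%:R / _ => /=.
set M : rat := (n.+3)%:R.
have M3 : 3 <= M by rewrite /M ler_nat.
have M0 : M != 0 by rewrite /M pnatr_eq0.
have xM : x * M = 1 by rewrite /x divfK.
have x0 : 0 < x by rewrite /x divr_gt0 // ltr0n.
have x13 : 3 * x <= 1 by rewrite -xM; nra.
have yE : y = 2 * x by rewrite /y /x mulrA mulr1.
have M2 : (n.+2)%:R = M - 1 :> rat by rewrite /M -[n.+3]addn1 natrD addrK.
set a := x ^+ n.+1.
have a0 : 0 < a by rewrite /a exprn_gt0.
set t : rat := 2 ^+ n.+1.
have t1 : 1 <= t by rewrite /t exprn_ege1 // ler1n.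
have E1 : x ^+ n.+3 + ((1 - x) * x ^+ n.+2) *+ n.+3 = (x*x + (1-x)*x*M) * a.
  by rewrite -mulr_natr -/M 2!exprS -/a; ring.
have E2 : y ^+ n.+2 + ((1 - y) * y ^+ n.+1) *+ n.+2 = (2*x + (1-2*x)*(M-1)) * (t * a).
  by rewrite -mulr_natr M2 exprS yE exprMn -/a -/t; ring.
rewrite E1 E2.
set L := x*x + (1-x)*x*M. set R := 2*x + (1-2*x)*(M-1).
have x2M : x * x * M = x by rewrite -mulrA xM mulr1.
have LE : L = x*x + 1 - x.
  have -> : L = x*x + x*M - x*x*M by rewrite /L; ring.
  by rewrite xM x2M.
have RE : R = M - 3 + 4*x.
  have -> : R = 2*x + M - 1 - 2*(x*M) + 2*x by rewrite /R; ring.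
  by rewrite xM; ring.
have h1 : 0 < (1 - 2*x)^+2 by rewrite exprn_gt0 //; lra.
have h2 : x * (M - 4 + 4*x) = (1 - 2*x)^+2.
  have -> : x * (M - 4 + 4*x) = x*M - 4*x + 4*(x*x) by ring.
  by rewrite xM; ring.
have h3 : 0 < M - 4 + 4*x by rewrite -(pmulr_rgt0 _ x0) h2.
have hxx : x * x <= x by rewrite ler_piMr ?ltW //; lra.
have hLR : L < R by rewrite LE RE; lra.
have R0 : 0 <= R by rewrite RE; lra.
have s1 : L * a < R * a by rewrite ltr_pM2r.
have s2 : R * a <= R * (t * a).
  rewrite mulrCA; apply: ler_peMl => //; apply: mulr_ge0 => //; exact: ltW.
exact: lt_le_trans s1 s2.
Qed.
Section Star.
Variable m : nat.
Hypothesis hm : (3 <= m)%N.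
Local Notation V := 'I_m.+1.
Local Notation e := (star_adj m).
Local Notation c := (ord0 : V).

Lemma eE u v : e u v = (u == c) (+) (v == c). Proof. by []. Qed.
Lemma e_c v : e c v = (v != c). Proof. by rewrite eE eqxx. Qed.
Lemma e_l l (h : l != c) v : e l v = (v == c).
Proof. by rewrite eE (negbTE h). Qed.

Lemma nbhd_c : nbhd e c = [set~ c].
Proof. by apply/setP=> v; rewrite !inE e_c. Qed.
Lemma deg_c : deg e c = m.
Proof. by rewrite /deg nbhd_c cardsC1 card_ord. Qed.
Lemma cnbhd_c : cnbhd e c = setT.
Proof. apply/setP=> v; rewrite /cnbhd !inE e_c; by case: (v == c). Qed.
Lemma nbhd_l l : l != c -> nbhd e l = [set c].
Proof. by move=> h; apply/setP=> v; rewrite !inE (e_l h). Qed.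
Lemma deg_l l : l != c -> deg e l = 1%N.
Proof. by move=> h; rewrite /deg nbhd_l // cards1. Qed.
Lemma cnbhd_l l : l != c -> cnbhd e l = [set l; c].
Proof. by move=> h; rewrite /cnbhd nbhd_l. Qed.

Definition lc (Z : {set V}) := #|Z :\ c|.

Lemma card_in (Z : {set V}) : c \in Z -> #|Z| = (lc Z).+1.
Proof. by move=> h; rewrite /lc (cardsD1 c Z) h. Qed.
Lemma cardC (Z: {set V}) : (#|Z| + #|~: Z| = m.+1)%N.
Proof. by rewrite cardsC card_ord. Qed.

Lemma step_lc Z : (lc Z <= m - 2)%N -> cc_step e Z :\ c = Z :\ c.
Proof.
move=> hZ; apply/setP=> v; rewrite /cc_step !inE.
case: (v =P c) => //= /eqP vc.
case vZ: (v \in Z) => //=.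
apply/negbTE/existsPn => u.
apply/negP; case/and3P => uZ euv /forallP hw.
have uc : u == c by move: euv; rewrite eE (negbTE vc) addbF.
rewrite (eqP uc) in uZ hw.
have sub : ~: Z \subset [set v].
  apply/subsetP => w; rewrite !inE => wZ.
  have := hw w; rewrite e_c wZ andbT.
  case: (w =P c) => [wc|_]; first by move: wZ; rewrite wc uZ.
  by move/implyP; apply.
have := subset_leq_card sub; rewrite cards1.
have := cardC Z; rewrite card_in // => h1 h2.
move: hZ; rewrite /lc in h1 * => hZ. lia.
Qed.

Lemma iter_lc Z n : (lc Z <= m-2)%N -> lc (iter n (cc_step e) Z) = lc Z.
Proof.
move=> hZ; elim: n => //= n IH.
have h : (lc (iter n (cc_step e) Z) <= m-2)%N by rewrite IH.
by have := step_lc h; rewrite -IH /lc => ->.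
Qed.

Lemma lc_T : lc setT = m.
Proof.
have := cardsD1 c [set: V]; rewrite cardsT card_ord in_setT add1n /lc => /eqP; rewrite eqSS eq_sym; move/eqP; exact: id.
Qed.

Lemma lc_Tx x : x != c -> lc (setT :\ x) = m.-1.
Proof.
move=> xc.
have h1 := cardsD1 x [set: V]; rewrite cardsT card_ord in_setT add1n in h1.
have : c \in setT :\ x by rewrite !inE eq_sym xc.
move/card_in => h2; rewrite h2 in h1.
by have := congr1 (fun k => k.-2) h1 => /= ->.
Qed.

Lemma not_zfs Z : (lc Z <= m-2)%N -> ~~ zfs e Z.
Proof.
move=> hZ; rewrite /zfs; apply/eqP => h.
have := iter_lc #|V| hZ; rewrite h lc_T. lia.
Qed.

Lemma zfs_of Z : (m-1 <= lc Z)%N -> zfs e Z.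
Proof.
move=> hZ.
have ext (Y : {set V}) : Y \subset cc_step e Y by apply: subsetUl.
have fixT : forall n, iter n (cc_step e) setT = setT.
  elim=> //= n IH; rewrite IH; apply/eqP; rewrite eqEsubset subsetT ext.
  done.
have c1 : c \in cc_step e Z.
  rewrite /cc_step inE. case cZ: (c \in Z) => //=. rewrite inE.
  have : (0 < #|Z :\ c|)%N by rewrite /lc in hZ; lia.
  case/card_gt0P => u; rewrite !inE => /andP [uc uZ].
  apply/existsP; exists u; rewrite uZ cZ /= (e_l uc) eqxx /=.
  apply/forallP => w; rewrite (e_l uc); apply/implyP => /andP [] //.
have ZY : Z \subset cc_step e Z := ext Z.
have lcY : (m - 1 <= lc (cc_step e Z))%N.
  rewrite /lc; apply: leq_trans hZ _; apply: subset_leq_card; exact: setSD ZY.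
have hY : cc_step e (cc_step e Z) = setT.
  apply/setP => v; rewrite in_setT {1}/cc_step inE.
  case vY: (v \in cc_step e Z) => //=. rewrite inE.
  have vc : v != c by apply/negP => /eqP vc; rewrite vc c1 in vY.
  apply/existsP; exists c; rewrite c1 vY /= e_c vc /=.
  apply/forallP => w; apply/implyP; rewrite e_c => /andP [wc wY].
  apply/negPn/negP => wv.
  have sub : [set v; w] \subset ~: cc_step e Z.
    apply/subsetP => x; rewrite in_set2 in_setC; case/orP => /eqP ->; rewrite ?vY //.
  have := subset_leq_card sub. rewrite cards2 eq_sym (negbTE wv) /=.
  have := cardC (cc_step e Z). rewrite card_in //. move: lcY; set a := lc _; set b := #|~: _|; clear; lia.
rewrite /zfs card_ord.
have gen n : iter (n + 2) (cc_step e) Z = setT by rewrite iterD /= hY fixT.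
by have := gen (m.+1 - 2)%N; rewrite subnK ?(leqW (ltnW hm)) // => ->.
Qed.

Lemma czfsE Z : contains_zfs e Z = (m - 1 <= lc Z)%N.
Proof.
apply/idP/idP.
- case/existsP => S /andP [SZ zS]. rewrite leqNgt; apply/negP => h.
  have : (lc S <= m-2)%N.
    rewrite /lc; apply: (leq_trans (subset_leq_card (setSD [set c] SZ))).
    move: h; rewrite /lc; set a := #|_|; clear; lia.
  by move/not_zfs; rewrite zS.
- move=> h; apply/existsP; exists Z; rewrite subxx zfs_of //.
Qed.


Definition q (B : {set V}) : rat := #|B|%:R / m%:R.

Lemma q_gt0 (B : {set V}) : c \in B -> 0 < q B.
Proof.
move=> cB; rewrite /q divr_gt0 // ltr0n; last by apply: leq_trans hm.
by apply/card_gt0P; exists c.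
Qed.

Lemma sw_B (B : {set V}) v : c \in B -> v \notin B -> stay_white e B v = 1 - q B.
Proof.
move=> cB vB.
have vc : v != c by apply: contraNneq vB => ->.
rewrite /stay_white (big_pred1 c); last first.
  move=> u /=; rewrite eE (negbTE vc) addbF; case: (u =P c) => [->|]; rewrite ?cB ?andbF //.
rewrite /Fprob cB e_c vc /= cnbhd_c.
have -> : ([set: V] \subset B) = false.
  apply/negbTE; apply: contraNN vB => /subsetP; apply; exact: in_setT.
by rewrite /= setTI deg_c.
Qed.

Lemma trans_B (B Z : {set V}) : c \in B -> trans e B Z =
  if B \subset Z then \prod_(v in ~: B) (if v \in Z then q B else 1 - q B) else 0.
Proof.
move=> cB; rewrite /trans; case: ifP => // _.
rewrite [LHS](eq_bigl (fun v => v \in ~: B)); last by move=> v; rewrite inE.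
apply: eq_bigr => v vB; rewrite inE in vB; rewrite sw_B //.
case: ifP => _ //; ring.
Qed.

Lemma trans_BT (B : {set V}) : c \in B -> trans e B setT = q B ^+ #|~: B|.
Proof.
move=> cB; rewrite trans_B // subsetT -prodr_const; apply: eq_bigr => v _.
by rewrite in_setT.
Qed.

Lemma TmassE (A : {set V}) k : T_mass e A k = \sum_(Z | contains_zfs e Z) dist e A k Z.
Proof.
rewrite /T_mass [RHS]big_mkcond [LHS]big_mkcond; apply: eq_bigr => Z _.
rewrite /in_S; case: eqP => [->|_] /=; case: (contains_zfs e Z) => //.
Qed.

Definition FF (B : {set V}) : rat :=
  q B ^+ #|~: B| + ((1 - q B) * q B ^+ #|~: B|.-1) *+ #|~: B|.

Lemma tmass_B (B : {set V}) : c \in B -> \sum_(Z | contains_zfs e Z) trans e B Z = FF B.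
Proof.
move=> cB.
pose S := setT |: [set setT :\ x | x in ~: B].
have step1 : \sum_(Z | contains_zfs e Z) trans e B Z = \sum_(Z in S) trans e B Z.
  rewrite big_mkcond [RHS]big_mkcond; apply: eq_bigr => Z _.
  case ZS: (Z \in S).
  - suff -> : contains_zfs e Z by [].
    rewrite czfsE. move: ZS; rewrite /S in_setU1 => /orP [/eqP -> | /imsetP [x xB ->]].
    + by rewrite lc_T leq_subr.
    + rewrite lc_Tx; first by rewrite subn1.
      by apply: contraTneq xB => ->; rewrite inE cB.
  - case hz: (contains_zfs e Z) => //. rewrite trans_B //. case: ifP => // BZ.
    exfalso.
    have cZ : c \in Z := subsetP BZ c cB.
    have hc := cardC Z; rewrite card_in // in hc.
    move: hz; rewrite czfsE => hz.
    have : (#|~: Z| <= 1)%N.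
      move: hc hz; set a := lc _; set b := #|_|; clear; lia.
    rewrite leq_eqVlt ltnS leqn0 => /orP [/cards1P [x hx] | /eqP/cards0_eq h0].
    + have ZE : Z = setT :\ x by rewrite setTD -hx setCK.
      have xZ : x \notin Z by rewrite -in_setC hx set11.
      have xB : x \in ~: B by rewrite inE; apply: contra xZ; apply: (subsetP BZ).
      have : setT :\ x \in S.
        by rewrite /S in_setU1; apply/orP; right; apply: imset_f.
      by rewrite -ZE ZS.
    + have ZT : Z = setT by rewrite -[Z]setCK h0 setC0.
      by move: ZS; rewrite ZT /S setU11.
have step2 : \sum_(Z in S) trans e B Z =
    trans e B setT + \sum_(x in ~: B) trans e B (setT :\ x).
  rewrite (bigD1 setT) ?setU11 //=; congr (_ + _).
  rewrite (eq_bigl (fun Z => Z \in [set setT :\ x | x in ~: B])); last first.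
    move=> Z /=; rewrite /S in_setU1; case: eqP => [->|] /=.
      symmetry; apply/negbTE/imsetP => -[x _ hx].
      by have := in_setT x; rewrite hx !inE eqxx.
    by rewrite andbT.
  rewrite big_imset //.
  move=> x y _ _ /setP h; move: (h x); rewrite !inE eqxx /= andbT.
  by move/esym/negbFE/eqP.
have tTx x : x \in ~: B -> trans e B (setT :\ x) = (1 - q B) * q B ^+ #|~: B|.-1.
  move=> xB. rewrite trans_B //.
  have -> : B \subset setT :\ x.
    apply/subsetP => y yB; rewrite !inE andbT; apply: contraTneq yB => ->.
    by rewrite inE in xB.
  rewrite (bigD1 x) //= !inE eqxx /=; congr (_ * _).
  rewrite (eq_bigr (fun _ => q B)); last by move=> v /andP [_ vx]; rewrite !inE vx.
  rewrite (eq_bigl (fun v => v \in ~: B :\ x)); last by move=> v; rewrite !inE andbC.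
  by rewrite prodr_const [in RHS](cardsD1 x) xB add1n.
rewrite step1 step2 trans_BT // (eq_bigr _ tTx) sumr_const.
done.
Qed.


Lemma sum_ind (A : {set V}) (f : {set V} -> rat) :
  \sum_(Z : {set V}) (Z == A)%:R * f Z = f A.
Proof.
rewrite (bigD1 A) //= eqxx mul1r big1 ?addr0 // => Z /negbTE ->; by rewrite mul0r.
Qed.

Lemma dist1 (A Z : {set V}) : dist e A 1 Z = trans e A Z.
Proof. by rewrite /= sum_ind. Qed.

Lemma sw_l_c l : l != c -> stay_white e [set l] c = 0.
Proof.
move=> lc0. rewrite /stay_white (big_pred1 l); last first.
  move=> u /=; rewrite inE eE eqxx addbT; case: (u =P l) => [->|] //=; by rewrite lc0.
rewrite /Fprob set11 /= (e_l lc0) eqxx /= cnbhd_l //.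
have -> : ([set l; c] \subset [set l]) = false.
  apply/negbTE/subsetPn; exists c; first by rewrite !inE eqxx orbT.
  by rewrite inE eq_sym.
rewrite /= deg_l //.
have -> : [set l; c] :&: [set l] = [set l].
  by apply/setIidPr; rewrite sub1set !inE eqxx.
by rewrite cards1 divr1 subrr.
Qed.

Lemma sw_l_v l v : l != c -> v != c -> v != l -> stay_white e [set l] v = 1.
Proof.
move=> lc0 vc vl; rewrite /stay_white big_pred0 // => u.
rewrite inE eE (negbTE vc) addbF; case: (u =P l) => [->|] //=.
by rewrite (negbTE lc0).
Qed.

Lemma trans_l l (Y : {set V}) : l != c -> trans e [set l] Y = (Y == [set l; c])%:R.
Proof.
move=> lc0; rewrite /trans sub1set.
case lY: (l \in Y); last first.
  case: eqP => // YE; by rewrite YE !inE eqxx in lY.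
case: (Y =P [set l; c]) => [YE | YN].
- apply: big1 => v; rewrite inE => vl. case: (v =P c) => [-> | /eqP vc].
  + by rewrite YE !inE eqxx orbT sw_l_c // subr0.
  + by rewrite YE !inE (negbTE vl) (negbTE vc) /= sw_l_v.
- case cY: (c \in Y).
  + have : ~~ (Y \subset [set l; c]).
      apply/negP => sub; apply: YN; apply/eqP.
      by rewrite eqEsubset sub /= subUset !sub1set lY cY.
    case/subsetPn => w wY. rewrite !inE => /norP [wl wc].
    by rewrite (bigD1 w) ?inE //= wY sw_l_v // subrr mul0r.
  + rewrite (bigD1 c) /=; last by rewrite inE eq_sym.
    by rewrite cY sw_l_c // mul0r.
Qed.

Lemma dist2_l l (Z : {set V}) : l != c -> dist e [set l] 2 Z = trans e [set l; c] Z.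
Proof.
move=> lc0.
have -> : dist e [set l] 2 Z = \sum_Y dist e [set l] 1 Y * trans e Y Z by [].
rewrite (eq_bigr (fun Y => (Y == [set l; c])%:R * trans e Y Z)); last first.
  by move=> Y _; rewrite dist1 trans_l.
exact: sum_ind.
Qed.

Lemma notT0 (A : {set V}) : ~~ contains_zfs e A -> ~~ T_nonempty e A 0.
Proof.
move=> h; apply/existsPn => Z; rewrite /in_S /=.
case: (Z =P A) => [->|_]; first by rewrite (negbTE h) andbF.
by rewrite eqxx.
Qed.

Lemma czfs_small (Z : {set V}) : (lc Z <= 1)%N -> ~~ contains_zfs e Z.
Proof. rewrite czfsE => h; rewrite -ltnNge; apply: leq_ltn_trans h _; lia. Qed.

Lemma Tne_at (A : {set V}) k (B : {set V}) : c \in B -> (forall Z, dist e A k Z = trans e B Z) ->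
  T_nonempty e A k.
Proof.
move=> cB hd; apply/existsP; exists setT; rewrite /in_S hd trans_BT //.
rewrite expf_neq0 ?czfsE ?lc_T ?leq_subr //=; last by rewrite gt_eqF // q_gt0.
Qed.

Lemma PA_c : PA_is e [set c] (FF [set c]).
Proof.
exists 1%N; split; [|split].
- by apply: (Tne_at (B := [set c])) => //; [rewrite set11 | exact: dist1].
- move=> k; rewrite ltnS leqn0 => /eqP ->; apply: notT0; apply: czfs_small.
  by rewrite /lc setDv cards0.
- rewrite TmassE (eq_bigr _ (fun Z _ => dist1 [set c] Z)) tmass_B //; exact: set11.
Qed.

Lemma lc_lc l : l != c -> lc [set l; c] = 1%N.
Proof.
move=> lc0; rewrite /lc.
have -> : [set l; c] :\ c = [set l].
  apply/setP => v; rewrite !inE; case: (v =P l) => [->|] /=; first by rewrite lc0.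
  by case: (v == c).
by rewrite cards1.
Qed.

Lemma PA_l l : l != c -> PA_is e [set l] (FF [set l; c]).
Proof.
move=> lc0; exists 2%N; split; [|split].
- apply: (Tne_at (B := [set l; c])); last by move=> Z; exact: dist2_l.
  by rewrite !inE eqxx orbT.
- move=> k; rewrite ltnS leq_eqVlt ltnS leqn0 => /orP [] /eqP ->.
  + apply/existsPn => Z; rewrite /in_S dist1 trans_l //.
    case: (Z =P [set l; c]) => [->|_]; last by rewrite eqxx.
    by rewrite (negbTE (czfs_small _)) ?andbF // lc_lc.
  + apply: notT0; apply: czfs_small.
    rewrite /lc; apply: leq_trans (subset_leq_card (subsetDl _ _)) _.
    by rewrite cards1.
- rewrite TmassE (eq_bigr _ (fun Z _ => dist2_l Z lc0)) tmass_B //.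
  by rewrite !inE eqxx orbT.
Qed.


Lemma FF_c : FF [set c] =
  let x : rat := (1%N)%:R / m%:R in x ^+ m + ((1 - x) * x ^+ m.-1) *+ m.
Proof. by rewrite /FF /q cards1 cardsC1 card_ord. Qed.

Lemma FF_l l : l != c -> FF [set l; c] =
  let y : rat := (2%N)%:R / m%:R in y ^+ m.-1 + ((1 - y) * y ^+ m.-2) *+ m.-1.
Proof.
move=> lc0.
have h2 : #|[set l; c]| = 2%N by rewrite cards2 lc0.
have hC : #|~: [set l; c]| = m.-1.
  have := cardC [set l; c]; rewrite h2; set b := #|~: _|; clear; lia.
by rewrite /FF /q h2 hC.
Qed.

Lemma main_sec : let v0 : 'I_m.+1 := ord0 in let v1 : 'I_m.+1 := inord 1 in
  exists p1 p0 : rat,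
    PA_is (star_adj m) [set v1] p1 /\ PA_is (star_adj m) [set v0] p0 /\ p0 < p1 /\
    (forall A : {set 'I_m.+1}, #|A| = 1%N ->
       exists p : rat, PA_is (star_adj m) A p /\ p <= p1).
Proof.
move=> v0 v1.
have v1c : v1 != c.
  rewrite /v1; apply/eqP => /(congr1 val); rewrite /= inordK //.
  exact: leqW (ltnW hm).
have hlt : FF [set c] < FF [set v1; c] by rewrite FF_c FF_l //; exact: ineq hm.
exists (FF [set v1; c]), (FF [set c]); split; first exact: PA_l.
split; first exact: PA_c.
split => //.
move=> A /eqP /cards1P [a ->].
case: (a =P c) => [-> | /eqP ac].
- exists (FF [set c]); split; [exact: PA_c | exact: ltW].
- exists (FF [set a; c]); split; [exact: PA_l | by rewrite FF_l // FF_l].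
Qed.

End Star.

Theorem mainTheorem5 (m : nat) (hm : (3 <= m)%N) :
  let v0 : 'I_m.+1 := ord0 in
  let v1 : 'I_m.+1 := inord 1 in
  exists p1 p0 : rat,
    PA_is (star_adj m) [set v1] p1 /\ PA_is (star_adj m) [set v0] p0 /\ p0 < p1 /\
    (forall A : {set 'I_m.+1}, #|A| = 1%N ->
       exists p : rat, PA_is (star_adj m) A p /\ p <= p1).
Proof. exact: main_sec hm. Qed.
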